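(* The manifold $\mathcal M_F$ is locally symmetric (i.e. $\nabla R\equiv0$) if and only if, for each $i$ with $1\le i\le k$ and every $u\in\mathbb R$, either $f_i(u)=0$ or $f_i'(u)=-\tfrac12$.
   Context: Fix an integer $k\ge 1$ and signs $\varepsilon_1,\dots,\varepsilon_k\in\{\pm1\}$. Let $f_1,\dots,f_k:\mathbb R\to\mathbb R$ be smooth, $F=(f_1,\dots,f_k)$. On $\mathbb R^{3k+2}$ with coordinates $(u_0,\dots,u_k,v_0,\dots,v_k,s_1,\dots,s_k)$ let $g_F$ be the symmetric metric whose only nonzero components on coordinate vector fields are (up to symmetry), for $1\le i\le k$ and $0\le i',j\le k$: $g_F(\partial_{u_0},\partial_{u_i})=2f_i(u_i)s_i$, $g_F(\partial_{u_i},\partial_{u_i})=-2u_0s_i$, $g_F(\partial_{u_{i'}},\partial_{v_j})=\delta_{i'j}$, $g_F(\partial_{s_i},\partial_{s_i})=\varepsilon_i$; $\mathcal M_F=(\mathbb R^{3k+2},g_F)$, with Levi-Civita connection $\nabla$ and curvature tensor $R(X,Y,Z,W)=g_F(\nabla_X\nabla_YZ-\nabla_Y\nabla_XZ-\nabla_{[X,Y]}Z,W)$. *)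

(* Defs.v *)
From Stdlib Require Import Reals.
From Coquelicot Require Import Coquelicot.
From mathcomp Require Import all_boot all_algebra.
From mathcomp Require Import Rstruct.

Set Implicit Arguments.
Unset Strict Implicit.
Unset Printing Implicit Defensive.
Import GRing.Theory.
Local Open Scope ring_scope.

(* Dimension 3k+2, written as a successor so that ordinals 'I_(dim k) are
   nonempty syntactically. *)
Definition dim (k : nat) : nat := (3 * k + 1).+1.

(* Coordinate layout (0-based index p):
     u_a  (0 <= a <= k)  -> index a
     v_a  (0 <= a <= k)  -> index k+1+a
     s_i  (1 <= i <= k)  -> index 2k+1+i                                  *)
Definition pt (k : nat) := 'I_(dim k) -> R.

Definition uidx (k a : nat) : nat := a.
Definition vidx (k a : nat) : nat := (k + 1 + a)%N.
Definition sidx (k i : nat) : nat := (2 * k + 1 + i)%N.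

Definition coord (k : nat) (x : pt k) (p : nat) : R := x (inord p).

Definition gnat (k : nat) (eps : nat -> R) (f : nat -> R -> R)
    (x : pt k) (p q : nat) : R :=
  if (p == 0)%N && (1 <= q <= k)%N then
    2 * f q (coord x (uidx k q)) * coord x (sidx k q)
  else if (q == 0)%N && (1 <= p <= k)%N then
    2 * f p (coord x (uidx k p)) * coord x (sidx k p)
  else if (p == q) && (1 <= p <= k)%N then
    - (2 * coord x (uidx k 0) * coord x (sidx k p))
  else if (p <= k)%N && (q == vidx k p) then 1
  else if (q <= k)%N && (p == vidx k q) then 1
  else if [exists i : 'I_k.+1, (1 <= i)%N && (p == sidx k i) && (q == sidx k i)]
  then eps (p - (2 * k + 1))%N
  else 0.

Definition gF (k : nat) (eps : nat -> R) (f : nat -> R -> R)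
    (x : pt k) (p q : 'I_(dim k)) : R := gnat eps f x p q.

Definition gmx k eps f (x : pt k) : 'M[R]_(dim k) :=
  \matrix_(p, q) gF eps f x p q.
Definition ginv k eps f (x : pt k) : 'M[R]_(dim k) := invmx (gmx eps f x).

Definition pd k (a : 'I_(dim k)) (h : pt k -> R) (x : pt k) : R :=
  Derive (fun t => h (fun j => if j == a then t else x j)) (x a).

Definition chr1 k eps f (x : pt k) (i j l : 'I_(dim k)) : R :=
  (pd i (fun y => gF eps f y j l) x + pd j (fun y => gF eps f y i l) x
   - pd l (fun y => gF eps f y i j) x) / 2.

Definition Gam k eps f (x : pt k) (m i j : 'I_(dim k)) : R :=
  \sum_(l < dim k) ginv eps f x m l * chr1 eps f x i j l.

(* R(d_i, d_j, d_c, d_l) = g(nabla_i nabla_j d_c - nabla_j nabla_i d_c, d_l)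
   (coordinate fields commute) *)
Definition Riem k eps f (x : pt k) (i j c l : 'I_(dim k)) : R :=
  \sum_(m < dim k) gF eps f x m l *
    (pd i (fun y => Gam eps f y m j c) x - pd j (fun y => Gam eps f y m i c) x
     + \sum_(p < dim k) (Gam eps f x p j c * Gam eps f x m i p
                         - Gam eps f x p i c * Gam eps f x m j p)).

Definition nablaR k eps f (x : pt k) (a i j c l : 'I_(dim k)) : R :=
  pd a (fun y => Riem eps f y i j c l) x
  - \sum_(p < dim k) (Gam eps f x p a i * Riem eps f x p j c l
                      + Gam eps f x p a j * Riem eps f x i p c l
                      + Gam eps f x p a c * Riem eps f x i j p l
                      + Gam eps f x p a l * Riem eps f x i j c p).

Definition locally_symmetric k (eps : nat -> R) (f : nat -> R -> R) : Prop :=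
  forall (x : pt k) (a i j c l : 'I_(dim k)), nablaR eps f x a i j c l = 0.

Definition smooth (h : R -> R) : Prop := forall (n : nat) (u : R), ex_derive_n h n u.

(* Main.v *)
Require Import Defs.
From Stdlib Require Import Reals FunctionalExtensionality.
From Coquelicot Require Import Coquelicot.
From mathcomp Require Import all_boot all_algebra.
From mathcomp Require Import Rstruct.
From mathcomp Require Import zify ring lra.
Set Implicit Arguments. Unset Strict Implicit. Unset Printing Implicit Defensive.
Import GRing.Theory.
Local Open Scope ring_scope.

Section Main.
Variables (k : nat) (eps : nat -> R) (f : nat -> R -> R).
Hypothesis k1 : (1 <= k)%N.
Hypothesis fsm : forall i, (1 <= i <= k)%N -> smooth (f i).

Notation D := (Defs.dim k).
Notation P := (pt k).

Definition fc (c : R) : P -> R := fun _ => c.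
Arguments fc c%_ring_scope.
Bind Scope ring_scope with R.
Definition fx (n : nat) : P -> R := fun y => Defs.coord y n.
Definition fF (i : nat) : P -> R := fun y => f i (Defs.coord y i).
Definition fF1 (i : nat) : P -> R := fun y => Derive (f i) (Defs.coord y i).
Definition fF2 (i : nat) : P -> R := fun y => Derive (Derive (f i)) (Defs.coord y i).
Definition fadd (h1 h2 : P -> R) : P -> R := fun y => h1 y + h2 y.
Definition fmul (h1 h2 : P -> R) : P -> R := fun y => h1 y * h2 y.

Definition pdn (a : nat) (h : P -> R) (x : P) := pd (inord a) h x.
Definition pdiffn (a : nat) (h : P -> R) (x : P) :=
  ex_derive (fun t => h (fun j => if j == inord a then t else x j)) (x (inord a)).

Lemma upd_same (a : nat) (x : P) : (fun j => if j == inord a then x (inord a) else x j) = x.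
Proof. apply: functional_extensionality => j; by case: eqP => [->|]. Qed.

Lemma coord_upd (n a : nat) t (x : P) : (n < D)%N -> (a < D)%N ->
  Defs.coord (fun j => if j == inord a then t else x j) n = if n == a then t else Defs.coord x n.
Proof.
move=> Hn Ha; rewrite /Defs.coord.
have -> : (inord n == inord a :> 'I_D) = (n == a).
  apply/eqP/eqP => [/(congr1 (@nat_of_ord _))|->//]; by rewrite !inordK.
done.
Qed.

Lemma pdn_c a c x : pdn a (fc c) x = 0.
Proof. rewrite /pdn /pd /fc; exact: Derive_const. Qed.

Lemma pdiffn_c a c x : pdiffn a (fc c) x.
Proof. rewrite /pdiffn /fc; exact: ex_derive_const. Qed.

Lemma pdn_x a n x : (n < D)%N -> (a < D)%N -> pdn a (fx n) x = if n == a then 1 else 0.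
Proof.
move=> Hn Ha; rewrite /pdn /pd /fx.
have -> : (fun t => Defs.coord (fun j => if j == inord a then t else x j) n) =
          (fun t => if n == a then t else Defs.coord x n).
  apply: functional_extensionality => t; exact: coord_upd.
case: eqP => _; [exact: Derive_id | exact: Derive_const].
Qed.

Lemma pdiffn_x a n x : (n < D)%N -> (a < D)%N -> pdiffn a (fx n) x.
Proof.
move=> Hn Ha; rewrite /pdiffn /fx.
have -> : (fun t => Defs.coord (fun j => if j == inord a then t else x j) n) =
          (fun t => if n == a then t else Defs.coord x n).
  apply: functional_extensionality => t; exact: coord_upd.
case: eqP => _; [exact: ex_derive_id | exact: ex_derive_const].
Qed.

Lemma exd1 i u : (1 <= i <= k)%N -> ex_derive (f i) u.
Proof. move=> Hi; exact: (fsm Hi 1 u). Qed.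
Lemma exd2 i u : (1 <= i <= k)%N -> ex_derive (Derive (f i)) u.
Proof. move=> Hi; exact: (fsm Hi 2 u). Qed.

Lemma pdn_F a i x : (1 <= i <= k)%N -> (i < D)%N -> (a < D)%N ->
  pdn a (fF i) x = if i == a then fF1 i x else 0.
Proof.
move=> Hi1 Hi Ha; rewrite /pdn /pd /fF /fF1.
have -> : (fun t => f i (Defs.coord (fun j => if j == inord a then t else x j) i)) =
          (fun t => if i == a then f i t else f i (Defs.coord x i)).
  apply: functional_extensionality => t; rewrite coord_upd //; by case: eqP.
case: eqP => [E|_]; last exact: Derive_const.
rewrite E /Defs.coord; done.
Qed.

Lemma pdiffn_F a i x : (1 <= i <= k)%N -> (i < D)%N -> (a < D)%N -> pdiffn a (fF i) x.
Proof.
move=> Hi1 Hi Ha; rewrite /pdiffn /fF.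
have -> : (fun t => f i (Defs.coord (fun j => if j == inord a then t else x j) i)) =
          (fun t => if i == a then f i t else f i (Defs.coord x i)).
  apply: functional_extensionality => t; rewrite coord_upd //; by case: eqP.
case: eqP => [E|_]; last exact: ex_derive_const.
exact: exd1.
Qed.

Lemma pdn_F1 a i x : (1 <= i <= k)%N -> (i < D)%N -> (a < D)%N ->
  pdn a (fF1 i) x = if i == a then fF2 i x else 0.
Proof.
move=> Hi1 Hi Ha; rewrite /pdn /pd /fF1 /fF2.
have -> : (fun t => Derive (f i) (Defs.coord (fun j => if j == inord a then t else x j) i)) =
          (fun t => if i == a then Derive (f i) t else Derive (f i) (Defs.coord x i)).
  apply: functional_extensionality => t; rewrite coord_upd //; by case: eqP.
case: eqP => [E|_]; last exact: Derive_const.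
rewrite E /Defs.coord; done.
Qed.

Lemma pdiffn_F1 a i x : (1 <= i <= k)%N -> (i < D)%N -> (a < D)%N -> pdiffn a (fF1 i) x.
Proof.
move=> Hi1 Hi Ha; rewrite /pdiffn /fF1.
have -> : (fun t => Derive (f i) (Defs.coord (fun j => if j == inord a then t else x j) i)) =
          (fun t => if i == a then Derive (f i) t else Derive (f i) (Defs.coord x i)).
  apply: functional_extensionality => t; rewrite coord_upd //; by case: eqP.
case: eqP => [E|_]; last exact: ex_derive_const.
exact: exd2.
Qed.

Lemma pdn_add a h1 h2 x : pdiffn a h1 x -> pdiffn a h2 x ->
  pdn a (fadd h1 h2) x = pdn a h1 x + pdn a h2 x.
Proof. move=> H1 H2; rewrite /pdn /pd /fadd; exact: Derive_plus. Qed.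

Lemma pdiffn_add a h1 h2 x : pdiffn a h1 x -> pdiffn a h2 x -> pdiffn a (fadd h1 h2) x.
Proof. move=> H1 H2; rewrite /pdiffn /fadd; exact: ex_derive_plus. Qed.

Lemma pdn_mul a h1 h2 x : pdiffn a h1 x -> pdiffn a h2 x ->
  pdn a (fmul h1 h2) x = pdn a h1 x * h2 x + h1 x * pdn a h2 x.
Proof.
move=> H1 H2; rewrite /pdn /pd /fmul.
rewrite (Derive_mult _ _ _ H1 H2) upd_same; done.
Qed.

Lemma pdiffn_mul a h1 h2 x : pdiffn a h1 x -> pdiffn a h2 x -> pdiffn a (fmul h1 h2) x.
Proof. move=> H1 H2; rewrite /pdiffn /fmul; exact: ex_derive_mult. Qed.


Hypothesis epsH : forall i, (1 <= i <= k)%N -> eps i = 1 \/ eps i = -1.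
Lemma epsnz i : (1 <= i <= k)%N -> eps i != 0.
Proof. move=> /epsH [->|->]; [exact: oner_neq0 | by rewrite oppr_eq0 oner_neq0]. Qed.

Ltac unf := unfold fmul, fadd, fc, fx, fF, fF1, fF2; cbv beta.

Ltac eqsubst :=
  repeat match goal with
  | a : nat, b : nat |- _ =>
      assert_fails (constr_eq a k); assert_fails (constr_eq b k);
      first [ (have Eq_ab : a = b by lia); subst a
            | (have Eq_ab : a = (k + 1 + b)%N by lia); subst a
            | (have Eq_ab : a = (2 * k + 1 + b)%N by lia); subst a ]
  end.

Ltac leaf := unf; eqsubst; rewrite ?addKn;
  first [ ring | field; repeat split; apply: epsnz; lia ].

Ltac crunch := repeat (let H := fresh "H" in case: ifP => H; rewrite ?H; try (exfalso; lia)).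

Lemma exS (p q : nat) : [exists i : 'I_k.+1, (1 <= i)%N && (p == sidx k i) && (q == sidx k i)]
   = ((2*k+2 <= p <= 3*k+1)%N && (p == q)).
Proof.
apply/existsP/idP.
  move=> [i /andP[/andP[H1 /eqP->] /eqP->]]; rewrite /sidx eqxx; have := ltn_ord i; lia.
move=> /andP[H /eqP <-]; exists (inord (p - (2*k+1))); rewrite /sidx inordK; lia.
Qed.

Definition gFt q := fmul (fmul (fc 2) (fF q)) (fx (2*k+1+q)).
Definition gCt p := fmul (fc (-2)) (fmul (fx 0) (fx (2*k+1+p))).

Definition gfun (p q : nat) : P -> R :=
  if (p == 0)%N && (1 <= q <= k)%N then gFt q
  else if (q == 0)%N && (1 <= p <= k)%N then gFt p
  else if (p == q) && (1 <= p <= k)%N then gCt p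
  else if (p <= k)%N && (q == k + 1 + p)%N then fc 1
  else if (q <= k)%N && (p == k + 1 + q)%N then fc 1
  else if (2*k+2 <= p <= 3*k+1)%N && (p == q) then fc (eps (p - (2 * k + 1)))
  else fc 0.

Lemma gnatE y p q : gnat eps f y p q = gfun p q y.
Proof.
rewrite /gnat exS /gfun /uidx /vidx /sidx /gFt /gCt; crunch; leaf.
Qed.

Lemma gnat_fun p q : (fun y => gnat eps f y p q) = gfun p q.
Proof. apply: functional_extensionality => y; exact: gnatE. Qed.

Lemma sum_onen (G : nat -> R) n0 : (forall p, (p < D)%N -> p != n0 -> G p = 0) ->
  \sum_(p < D) G p = if (n0 < D)%N then G n0 else 0.
Proof.
move=> HG; case: ltnP => H.
  rewrite (bigD1 (Ordinal H)) //= [X in _ + X]big1 ?addr0 //.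
  move=> p Hp; apply: HG; first exact: ltn_ord.
  by apply: contra Hp => /eqP E; apply/eqP; apply: val_inj.
rewrite big1 // => p _; apply: HG; first exact: ltn_ord. apply/eqP => E; have := ltn_ord p; lia.
Qed.


Inductive idx := IU of nat | IV of nat | IS of nat.

Definition enc (e : idx) : nat :=
  match e with IU a => a | IV a => (k + 1 + a)%N | IS b => (2 * k + 1 + b)%N end.
Definition valid (e : idx) : bool :=
  match e with IU a => (a <= k)%N | IV a => (a <= k)%N | IS b => (1 <= b <= k)%N end.
Definition dec (n : nat) : idx :=
  if (n <= k)%N then IU n else if (n <= 2 * k + 1)%N then IV (n - (k + 1)) else IS (n - (2 * k + 1)).
Definition ieq (e1 e2 : idx) : bool :=
  match e1, e2 with
  | IU a, IU b => a == b | IV a, IV b => a == b | IS a, IS b => a == b | _, _ => false end.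

Lemma enc_lt e : valid e -> (enc e < D)%N.
Proof. case: e => a /=; rewrite /Defs.dim; lia. Qed.
Lemma dec_valid n : (n < D)%N -> valid (dec n).
Proof. rewrite /dec /Defs.dim => H; case: ifP => H1 /=; [|case: ifP => H2 /=]; lia. Qed.
Lemma enc_dec n : (n < D)%N -> enc (dec n) = n.
Proof. rewrite /dec /Defs.dim => H; case: ifP => H1 /=; [|case: ifP => H2 /=]; lia. Qed.
Lemma dec_enc e : valid e -> dec (enc e) = e.
Proof.
case: e => a /= Ha; rewrite /dec.
- by rewrite Ha.
- have -> : (k + 1 + a <= k)%N = false by lia.
  have -> : (k + 1 + a <= 2 * k + 1)%N = true by lia.
  congr IV; lia.
- have -> : (2 * k + 1 + a <= k)%N = false by lia.
  have -> : (2 * k + 1 + a <= 2 * k + 1)%N = false by lia.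
  congr IS; lia.
Qed.
Lemma enc_eqE e1 e2 : valid e1 -> valid e2 -> (enc e1 == enc e2) = ieq e1 e2.
Proof.
case: e1 => a; case: e2 => b /= Ha Hb; apply/idP/idP; try lia.
Qed.

Definition fxI (e : idx) : P -> R := fx (enc e).

Lemma pdI_x a e x : valid a -> valid e -> pdn (enc a) (fxI e) x = if ieq e a then 1 else 0.
Proof. move=> Va Ve; rewrite /fxI pdn_x ?enc_lt // enc_eqE //. Qed.
Lemma pdiI_x a e x : valid a -> valid e -> pdiffn (enc a) (fxI e) x.
Proof. move=> Va Ve; rewrite /fxI; apply: pdiffn_x; exact: enc_lt. Qed.
Lemma pdI_F a b x : valid a -> (1 <= b <= k)%N ->
  pdn (enc a) (fF b) x = if ieq (IU b) a then fF1 b x else 0.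
Proof.
move=> Va Hb; rewrite pdn_F //; last exact: enc_lt; last by rewrite /Defs.dim; lia.
by rewrite -[X in X == _]/(enc (IU b)) enc_eqE //= ; lia.
Qed.
Lemma pdiI_F a b x : valid a -> (1 <= b <= k)%N -> pdiffn (enc a) (fF b) x.
Proof. move=> Va Hb; apply: pdiffn_F => //; [rewrite /Defs.dim; lia | exact: enc_lt]. Qed.
Lemma pdI_F1 a b x : valid a -> (1 <= b <= k)%N ->
  pdn (enc a) (fF1 b) x = if ieq (IU b) a then fF2 b x else 0.
Proof.
move=> Va Hb; rewrite pdn_F1 //; last exact: enc_lt; last by rewrite /Defs.dim; lia.
by rewrite -[X in X == _]/(enc (IU b)) enc_eqE //= ; lia.
Qed.
Lemma pdiI_F1 a b x : valid a -> (1 <= b <= k)%N -> pdiffn (enc a) (fF1 b) x.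
Proof. move=> Va Hb; apply: pdiffn_F1 => //; [rewrite /Defs.dim; lia | exact: enc_lt]. Qed.

Definition gFI b := fmul (fmul (fc 2) (fF b)) (fxI (IS b)).
Definition gCI a := fmul (fc (-2)) (fmul (fxI (IU 0)) (fxI (IS a))).

Definition gI (p q : idx) : P -> R :=
  match p, q with
  | IU a, IU b => if a == 0%N then (if b == 0%N then fc 0 else gFI b)
                  else if b == 0%N then gFI a else if a == b then gCI a else fc 0
  | IU a, IV b => if a == b then fc 1 else fc 0
  | IV a, IU b => if a == b then fc 1 else fc 0
  | IS a, IS b => if a == b then fc (eps a) else fc 0
  | _, _ => fc 0
  end.

Ltac unfI := unfold gFI, gCI, gFt, gCt, fxI, fmul, fadd, fc, fx, fF, fF1, fF2, enc; cbv beta iota.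

Lemma gnat_I y p q : valid p -> valid q -> gnat eps f y (enc p) (enc q) = gI p q y.
Proof.
move=> Vp Vq; rewrite gnatE /gfun.
case: p Vp => a /= Va; case: q Vq => b /= Vb; crunch; unfI; eqsubst; rewrite ?addKn; ring.
Qed.


Definition sU (H : idx -> R) := \sum_(a < k.+1) H (IU a).
Definition sV (H : idx -> R) := \sum_(a < k.+1) H (IV a).
Definition sS (H : idx -> R) := \sum_(b < k) H (IS b.+1).
Definition sumI (H : idx -> R) := sU H + sV H + sS H.

Lemma sum_split (G : nat -> R) : \sum_(l < D) G l = sumI (fun e => G (enc e)).
Proof.
have -> : \sum_(l < D) G l = \sum_(l < k.+1 + (k.+1 + k)) G l.
  by have -> : D = (k.+1 + (k.+1 + k))%N by rewrite /Defs.dim; lia.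
rewrite big_split_ord /= big_split_ord /= /sumI /sU /sV /sS addrA.
congr (_ + _ + _); apply: eq_bigr => i _ /=; congr (G _); lia.
Qed.

Lemma eq_sumI (H1 H2 : idx -> R) : (forall e, valid e -> H1 e = H2 e) -> sumI H1 = sumI H2.
Proof.
move=> E; rewrite /sumI /sU /sV /sS; congr (_ + _ + _); apply: eq_bigr => i _; apply: E => /=;
  have := ltn_ord i; lia.
Qed.

Lemma sum_dec (H : idx -> R) : \sum_(l < D) H (dec l) = sumI H.
Proof.
rewrite (sum_split (fun l => H (dec l))); apply: eq_sumI => e Ve; by rewrite dec_enc.
Qed.

Lemma sU_one H c : (c <= k)%N -> (forall a, (a <= k)%N -> a != c -> H (IU a) = 0) -> sU H = H (IU c).
Proof.
move=> Hc E; rewrite /sU (bigD1 (Ordinal (n := k.+1) (m := c) Hc)) //= big1 ?addr0 //.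
move=> i Hi; apply: E; first by have := ltn_ord i; lia.
by apply: contra Hi => /eqP Ei; apply/eqP; apply: val_inj.
Qed.
Lemma sU_zero H : (forall a, (a <= k)%N -> H (IU a) = 0) -> sU H = 0.
Proof. move=> E; rewrite /sU big1 // => i _; apply: E; have := ltn_ord i; lia. Qed.
Lemma sV_one H c : (c <= k)%N -> (forall a, (a <= k)%N -> a != c -> H (IV a) = 0) -> sV H = H (IV c).
Proof.
move=> Hc E; rewrite /sV (bigD1 (Ordinal (n := k.+1) (m := c) Hc)) //= big1 ?addr0 //.
move=> i Hi; apply: E; first by have := ltn_ord i; lia.
by apply: contra Hi => /eqP Ei; apply/eqP; apply: val_inj.
Qed.
Lemma sV_zero H : (forall a, (a <= k)%N -> H (IV a) = 0) -> sV H = 0.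
Proof. move=> E; rewrite /sV big1 // => i _; apply: E; have := ltn_ord i; lia. Qed.
Lemma sS_zero H : (forall b, (1 <= b <= k)%N -> H (IS b) = 0) -> sS H = 0.
Proof. move=> E; rewrite /sS big1 // => i _; apply: E; have := ltn_ord i; lia. Qed.
Lemma sS_one H c : (forall b, (1 <= b <= k)%N -> b != c -> H (IS b) = 0) ->
  sS H = if (1 <= c <= k)%N then H (IS c) else 0.
Proof.
move=> E; case: ifP => Hc.
  have Hc' : (c.-1 < k)%N by lia.
  rewrite /sS (bigD1 (Ordinal Hc')) //= big1 ?addr0.
    by congr (H (IS _)); lia.
  move=> i Hi; apply: E; first by have := ltn_ord i; lia.
  apply: contra Hi => /eqP Ei; apply/eqP; apply: val_inj => /=; lia.
apply: sS_zero => b Hb; apply: E => //; apply/eqP => Eb; subst; lia.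
Qed.

Definition pay (e : idx) : nat := match e with IU a => a | IV a => a | IS a => a end.
Definition bl (i j : idx) : nat := if ieq i (IU 0) then pay j else pay i.
Definition lab (b : nat) (e : idx) : nat :=
  match e with
  | IU a => if a == 0%N then 0%N else if a == b then 1%N else 3%N
  | IS a => if a == b then 2%N else 3%N
  | IV _ => 3%N
  end.
Definition RB (li lj lc ll b : nat) : P -> R :=
  let F2E := fmul (fc (eps b)^-1) (fmul (fF b) (fF b)) in
  let Dd := fadd (fc 1) (fF1 b) in
  match li, lj, lc, ll with
  | 0, 1, 0, 1 => fmul (fc (-1)) F2E
  | 0, 1, 1, 0 => F2E
  | 1, 0, 0, 1 => F2E
  | 1, 0, 1, 0 => fmul (fc (-1)) F2E
  | 0, 1, 1, 2 => Dd
  | 0, 1, 2, 1 => fmul (fc (-1)) Dd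
  | 1, 0, 1, 2 => fmul (fc (-1)) Dd
  | 1, 0, 2, 1 => Dd
  | 1, 2, 0, 1 => Dd
  | 1, 2, 1, 0 => fmul (fc (-1)) Dd
  | 2, 1, 0, 1 => fmul (fc (-1)) Dd
  | 2, 1, 1, 0 => Dd
  | _, _, _, _ => fc 0
  end%N.
Definition RiemE (i j c l : idx) : P -> R :=
  let b := bl i j in RB (lab b i) (lab b j) (lab b c) (lab b l) b.

Definition NB (li lj lc ll b : nat) : P -> R :=
  let G := fmul (fc (- (eps b)^-1)) (fmul (fF b) (fadd (fc 2) (fmul (fc 4) (fF1 b)))) in
  let H := fF2 b in
  match li, lj, lc, ll with
  | 0, 1, 0, 1 => G
  | 0, 1, 1, 0 => fmul (fc (-1)) G
  | 1, 0, 0, 1 => fmul (fc (-1)) G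
  | 1, 0, 1, 0 => G
  | 0, 1, 1, 2 => H
  | 0, 1, 2, 1 => fmul (fc (-1)) H
  | 1, 0, 1, 2 => fmul (fc (-1)) H
  | 1, 0, 2, 1 => H
  | 1, 2, 0, 1 => H
  | 1, 2, 1, 0 => fmul (fc (-1)) H
  | 2, 1, 0, 1 => fmul (fc (-1)) H
  | 2, 1, 1, 0 => H
  | _, _, _, _ => fc 0
  end%N.
Definition NE (a i j c l : idx) : P -> R :=
  match a with
  | IU b => if b == 0%N then fc 0 else NB (lab b i) (lab b j) (lab b c) (lab b l) b
  | _ => fc 0
  end.

Ltac prune := try match goal with
  | Hc : (?x == ?x) = false |- _ => by rewrite eqxx in Hc
  | Hc : is_true (?x != ?x) |- _ => by rewrite eqxx in Hc
  end.
Ltac scrunch := unfold bl, pay, lab; cbn [ieq RB NB]; repeat (match goal with |- context [if ?c then _ else _] =>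
    lazymatch c with context [if _ then _ else _] => fail | _ =>
      let H := fresh "H" in case H : c; [ try (move/eqP: H => H; subst) | idtac ] end end;
    unfold bl, pay, lab; cbn [ieq RB NB]; rewrite ?eqxx; prune).
Ltac sc := first [done | lia | (rewrite /=; lia)].
Ltac pdiffT := match goal with
 | |- pdiffn _ (fadd _ _) _ => apply: pdiffn_add; pdiffT
 | |- pdiffn _ (fmul _ _) _ => apply: pdiffn_mul; pdiffT
 | |- pdiffn _ (fc _) _ => apply: pdiffn_c
 | |- pdiffn _ (fxI _) _ => apply: pdiI_x; sc
 | |- pdiffn _ (fF _) _ => apply: pdiI_F; sc
 | |- pdiffn _ (fF1 _) _ => apply: pdiI_F1; sc
 end.
Ltac pds := repeat first
 [ rewrite pdn_c
 | rewrite pdn_add; [|solve [pdiffT]|solve [pdiffT]]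
 | rewrite pdn_mul; [|solve [pdiffT]|solve [pdiffT]]
 | rewrite pdI_x; [|sc|sc]
 | rewrite pdI_F; [|sc|sc]
 | rewrite pdI_F1; [|sc|sc] ].
Ltac leafI := unfI; first [ ring | (field; repeat split; apply: epsnz; lia) | congruence | (exfalso; lia) ].

Definition GIe (p q : idx) (x : P) : R :=
  match p, q with
  | IU a, IV b => if a == b then 1 else 0
  | IV a, IU b => if a == b then 1 else 0
  | IV a, IV b => - gI (IU a) (IU b) x
  | IS a, IS b => if a == b then (eps a)^-1 else 0
  | _, _ => 0
  end.

Lemma GI_prod x p q : valid p -> valid q ->
  sumI (fun e => gI p e x * GIe e q x) = if ieq p q then 1 else 0.
Proof.
rewrite /sumI.
case: p => a /= Va; case: q => b /= Vb.
all: (repeat first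
  [ rewrite sU_zero; [| by move=> c Hc /=; scrunch; leafI ]
  | rewrite sV_zero; [| by move=> c Hc /=; scrunch; leafI ]
  | rewrite sS_zero; [| by move=> c Hc /=; scrunch; leafI ]
  | match goal with c : nat |- _ => rewrite (sU_one (c := c)); [| by [] | by move=> d Hd Hne /=; scrunch; leafI ] end
  | match goal with c : nat |- _ => rewrite (sV_one (c := c)); [| by [] | by move=> d Hd Hne /=; scrunch; leafI ] end
  | match goal with c : nat |- _ => rewrite (sS_one (c := c)); [| by move=> d Hd Hne /=; scrunch; leafI ] end ]).
all: (cbn [gI GIe ieq]; scrunch; leafI).
Qed.


Lemma gF_I (p q : 'I_D) y : gF eps f y p q = gI (dec p) (dec q) y.
Proof. by rewrite /gF -gnat_I ?dec_valid // !enc_dec. Qed.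
Lemma gF_fun (p q : 'I_D) : (fun y => gF eps f y p q) = gI (dec p) (dec q).
Proof. apply: functional_extensionality => y; exact: gF_I. Qed.

Lemma ginvE x (p q : 'I_D) : ginv eps f x p q = GIe (dec p) (dec q) x.
Proof.
pose M : 'M[R]_D := \matrix_(p, q) GIe (dec p) (dec q) x.
have HM : gmx eps f x *m M = 1%:M.
  apply/matrixP => p' q'; rewrite !mxE.
  rewrite (eq_bigr (fun j : 'I_D => gI (dec p') (dec j) x * GIe (dec j) (dec q') x)); last first.
    by move=> j _; rewrite !mxE gF_I.
  rewrite (sum_dec (fun e => gI (dec p') e x * GIe e (dec q') x)).
  rewrite GI_prod ?dec_valid // -enc_eqE ?dec_valid // !enc_dec //.
  have -> : (nat_of_ord p' == nat_of_ord q') = (p' == q') by [].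
  by case: (p' == q').
have [U _] := mulmx1_unit HM.
by rewrite /ginv -[invmx _]mulmx1 -HM mulKmx // mxE.
Qed.

Lemma pd_I (a : 'I_D) h x : pd a h x = pdn (enc (dec a)) h x.
Proof. by rewrite /pdn enc_dec // inord_val. Qed.

Definition chrI (i j l : idx) (x : P) : R :=
  (pdn (enc i) (gI j l) x + pdn (enc j) (gI i l) x - pdn (enc l) (gI i j) x) / 2.

Lemma chr1_I x (i j l : 'I_D) : chr1 eps f x i j l = chrI (dec i) (dec j) (dec l) x.
Proof. by rewrite /chr1 /chrI !pd_I !gF_fun. Qed.

Ltac calc := repeat (progress (scrunch; unfold gFI, gCI; pds)).

Lemma chrI_V i j d x : valid i -> valid j -> (d <= k)%N -> chrI i j (IV d) x = 0.
Proof.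
rewrite /chrI; case: i => a Va; case: j => b Vb Vd; rewrite /= in Va Vb; cbn [gI]; calc; leafI.
Qed.


Definition GamE (m i j : idx) : P -> R :=
  match m with
  | IU _ => fc 0
  | IV c =>
    match i, j with
    | IU a, IU b =>
      if c == 0%N then
        (if a == b then (if a == 0%N then fc 0
                         else fmul (fxI (IS a)) (fadd (fmul (fc 2) (fF1 a)) (fc 1)))
         else fc 0)
      else if a == 0%N then (if b == c then fmul (fc (-1)) (fxI (IS c)) else fc 0)
      else if b == 0%N then (if a == c then fmul (fc (-1)) (fxI (IS c)) else fc 0)
      else fc 0
    | IU a, IS b =>
      if c == 0%N then (if a == b then fF a else fc 0)
      else if a == 0%N then (if b == c then fF c else fc 0)
      else if a == c then (if b == c then fmul (fc (-1)) (fxI (IU 0)) else fc 0)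
      else fc 0
    | IS b, IU a =>
      if c == 0%N then (if a == b then fF a else fc 0)
      else if a == 0%N then (if b == c then fF c else fc 0)
      else if a == c then (if b == c then fmul (fc (-1)) (fxI (IU 0)) else fc 0)
      else fc 0
    | _, _ => fc 0
    end
  | IS c =>
    if c == 0%N then fc 0 else
    match i, j with
    | IU a, IU b =>
      if a == 0%N then (if b == c then fmul (fc (- (eps c)^-1)) (fF c) else fc 0)
      else if b == 0%N then (if a == c then fmul (fc (- (eps c)^-1)) (fF c) else fc 0)
      else if a == c then (if b == c then fmul (fc ((eps c)^-1)) (fxI (IU 0)) else fc 0)
      else fc 0
    | _, _ => fc 0
    end
  end.

Definition GamI (m i j : idx) (x : P) : R := sumI (fun l => GIe m l x * chrI i j l x).

Lemma Gam_I x (m i j : 'I_D) : Gam eps f x m i j = GamI (dec m) (dec i) (dec j) x.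
Proof.
rewrite /Gam (eq_bigr (fun l : 'I_D => GIe (dec m) (dec l) x * chrI (dec i) (dec j) (dec l) x)).
  exact: (sum_dec (fun l => GIe (dec m) l x * chrI (dec i) (dec j) l x)).
by move=> l _; rewrite ginvE chr1_I.
Qed.

Ltac side := first [ by move=> ? ? ? /=; rewrite ?chrI_V //; scrunch; leafI
                   | by move=> ? ? /=; rewrite ?chrI_V //; scrunch; leafI ].
Ltac blocks := repeat first
  [ rewrite sU_zero; [| side ]
  | rewrite sV_zero; [| side ]
  | rewrite sS_zero; [| side ]
  | match goal with c : nat |- _ => rewrite (sU_one (c := c)); [| by [] | side ] end
  | match goal with c : nat |- _ => rewrite (sV_one (c := c)); [| by [] | side ] end
  | match goal with c : nat |- _ => rewrite (sS_one (c := c)); [| side ] end ].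

Lemma GamI_E m i j x : valid m -> valid i -> valid j -> GamI m i j x = GamE m i j x.
Proof.
rewrite /GamI /sumI; case: m => c Vc Vi Vj; rewrite /= in Vc; blocks; cbn [GIe].
all: case: i Vi => a Va; case: j Vj => b Vb; rewrite /= in Va Vb; rewrite /chrI; cbn [gI GamE].
all: calc; leafI.
Qed.



Lemma Gam_val x (m i j : 'I_D) : Gam eps f x m i j = GamE (dec m) (dec i) (dec j) x.
Proof. by rewrite Gam_I GamI_E ?dec_valid. Qed.
Lemma Gam_fun (m j c : 'I_D) : (fun y => Gam eps f y m j c) = GamE (dec m) (dec j) (dec c).
Proof. apply: functional_extensionality => y; exact: Gam_val. Qed.

Definition RiemI (i j c l : idx) (x : P) : R :=
  sumI (fun m => gI m l x * (pdn (enc i) (GamE m j c) x - pdn (enc j) (GamE m i c) x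
     + sumI (fun p => GamE p j c x * GamE m i p x - GamE p i c x * GamE m j p x))).

Lemma Riem_I x (i j c l : 'I_D) : Riem eps f x i j c l = RiemI (dec i) (dec j) (dec c) (dec l) x.
Proof.
rewrite /Riem /RiemI -sum_dec; apply: eq_bigr => m _.
rewrite gF_I !pd_I !Gam_fun; congr (_ * (_ + _)).
rewrite -sum_dec; apply: eq_bigr => p _; by rewrite !Gam_val.
Qed.

Lemma GamE_lowV m i b : GamE m i (IV b) = fc 0.
Proof. case: m => c //=; case: i => a //=; by case: ifP. Qed.
Lemma GamE_lowV' m j b : GamE m (IV b) j = fc 0.
Proof. case: m => c //=; case: j => a //=; by case: ifP. Qed.

Lemma bl_le i j : valid i -> valid j -> (bl i j <= k)%N.
Proof. case: i => a; case: j => b; unfold bl, pay; cbn [ieq valid]; try case: ifP => _; lia. Qed.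

Lemma GamE_Ssupp i j b x : valid i -> valid j -> b != bl i j -> GamE (IS b) i j x = 0.
Proof.
case: i => a Va; case: j => b' Vb; rewrite /= in Va Vb; cbn [GamE];
  scrunch; move=> Hne; prune; leafI.
Qed.

Lemma sumI_zero H : (forall e, H e = 0) -> sumI H = 0.
Proof. move=> HH; rewrite /sumI /sU /sV /sS !big1 ?addr0 //. Qed.
Lemma sumI_sub (H1 H2 : idx -> R) : sumI (fun e => H1 e - H2 e) = sumI H1 - sumI H2.
Proof. rewrite /sumI /sU /sV /sS !sumrB; ring. Qed.

Lemma Qsum m i j c x : valid j -> valid c ->
  sumI (fun p => GamE p j c x * GamE m i p x) = GamE (IS (bl j c)) j c x * GamE m i (IS (bl j c)) x.
Proof.
move=> Vj Vc; rewrite /sumI sU_zero; last by move=> a Ha; rewrite /= /fc mul0r.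
rewrite sV_zero; last by move=> a Ha; rewrite GamE_lowV /fc mulr0.
rewrite (sS_one (c := bl j c)); last by move=> b Hb Hne; rewrite GamE_Ssupp // mul0r.
rewrite !add0r; case: ifP => // H.
have -> : bl j c = 0%N by have := bl_le Vj Vc; lia.
by rewrite /= /fc mul0r.
Qed.

Lemma Outer (T : idx -> R) l x : valid l -> (forall a, T (IU a) = 0) ->
  sumI (fun m => gI m l x * T m) =
  match l with IU d => T (IV d) | IV _ => 0 | IS d => eps d * T (IS d) end.
Proof.
case: l => d Vd HT; rewrite /= in Vd; rewrite /sumI.
- rewrite sU_zero; last by move=> a _; rewrite HT mulr0.
  rewrite (sV_one (c := d)) //; last by move=> a _ Hne /=; rewrite (negbTE Hne) /fc mul0r.
  rewrite sS_zero; last by move=> a _ /=; rewrite /fc mul0r.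
  by rewrite /= eqxx /fc mul1r add0r addr0.
- rewrite sU_zero; last by move=> a _; rewrite HT mulr0.
  rewrite sV_zero; last by move=> a _ /=; rewrite /fc mul0r.
  rewrite sS_zero; last by move=> a _ /=; rewrite /fc mul0r.
  by rewrite !addr0.
- rewrite sU_zero; last by move=> a _; rewrite HT mulr0.
  rewrite sV_zero; last by move=> a _ /=; rewrite /fc mul0r.
  rewrite (sS_one (c := d)); last by move=> a _ Hne /=; rewrite (negbTE Hne) /fc mul0r.
  by rewrite Vd /= eqxx /fc !add0r.
Qed.

Lemma RiemI_E i j c l x : valid i -> valid j -> valid c -> valid l ->
  RiemI i j c l x = RiemE i j c l x.
Proof.
move=> Vi Vj Vc Vl; rewrite /RiemI Outer //; last first.
  move=> a; rewrite /= pdn_c pdn_c sumI_zero ?subrr ?addr0 // => e; by rewrite /fc !mulr0 subrr.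
case: l Vl => d Vd; rewrite /= in Vd; rewrite ?sumI_sub ?Qsum //.
all: case: i Vi => a Va; case: j Vj => b Vb; case: c Vc => e Ve; rewrite /= in Va Vb Ve.
all: rewrite /RiemE; cbn [GamE]; calc; leafI.
Qed.


Lemma Riem_val x (i j c l : 'I_D) : Riem eps f x i j c l = RiemE (dec i) (dec j) (dec c) (dec l) x.
Proof. by rewrite Riem_I RiemI_E ?dec_valid. Qed.
Lemma Riem_fun (i j c l : 'I_D) : (fun y => Riem eps f y i j c l) = RiemE (dec i) (dec j) (dec c) (dec l).
Proof. apply: functional_extensionality => y; exact: Riem_val. Qed.

Lemma RB3_1 lj lc ll b : RB 3 lj lc ll b = fc 0. Proof. by []. Qed.
Lemma RB3_2 li lc ll b : RB li 3 lc ll b = fc 0. Proof. by case: li => [|[|[|]]]. Qed.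
Lemma RB3_3 li lj ll b : RB li lj 3 ll b = fc 0.
Proof. by case: li => [|[|[|]]]; case: lj => [|[|[|]]]. Qed.
Lemma RB3_4 li lj lc b : RB li lj lc 3 b = fc 0.
Proof. by case: li => [|[|[|]]]; case: lj => [|[|[|]]]; case: lc => [|[|[|]]]. Qed.

Lemma RiemE_V1 b j c l : RiemE (IV b) j c l = fc 0. Proof. by rewrite /RiemE /= ?RB3_1. Qed.
Lemma RiemE_V2 b i c l : RiemE i (IV b) c l = fc 0. Proof. by rewrite /RiemE /= ?RB3_2. Qed.
Lemma RiemE_V3 b i j l : RiemE i j (IV b) l = fc 0. Proof. by rewrite /RiemE /= ?RB3_3. Qed.
Lemma RiemE_V4 b i j c : RiemE i j c (IV b) = fc 0. Proof. by rewrite /RiemE /= ?RB3_4. Qed.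

Definition nablaI (a i j c l : idx) (x : P) : R :=
  pdn (enc a) (RiemE i j c l) x
  - sumI (fun p => GamE p a i x * RiemE p j c l x + GamE p a j x * RiemE i p c l x
                 + GamE p a c x * RiemE i j p l x + GamE p a l x * RiemE i j c p x).

Lemma nablaR_I x (a i j c l : 'I_D) :
  nablaR eps f x a i j c l = nablaI (dec a) (dec i) (dec j) (dec c) (dec l) x.
Proof.
rewrite /nablaR /nablaI pd_I Riem_fun -sum_dec; congr (_ - _); apply: eq_bigr => p _.
by rewrite !Gam_val !Riem_val.
Qed.

Lemma sumI_add (H1 H2 : idx -> R) : sumI (fun e => H1 e + H2 e) = sumI H1 + sumI H2.
Proof. rewrite /sumI /sU /sV /sS !big_split /=; ring. Qed.

Lemma Qsum_gen a X x (Y : idx -> R) : valid a -> valid X -> (forall b, Y (IV b) = 0) ->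
  sumI (fun p => GamE p a X x * Y p) = GamE (IS (bl a X)) a X x * Y (IS (bl a X)).
Proof.
move=> Va VX HY; rewrite /sumI sU_zero; last by move=> b Hb; rewrite /= /fc mul0r.
rewrite sV_zero; last by move=> b Hb; rewrite HY mulr0.
rewrite (sS_one (c := bl a X)); last by move=> b Hb Hne; rewrite GamE_Ssupp // mul0r.
rewrite !add0r; case: ifP => // H.
have -> : bl a X = 0%N by have := bl_le Va VX; lia.
by rewrite /= /fc mul0r.
Qed.

Lemma nablaI_pre a i j c l x : valid a -> valid i -> valid j -> valid c -> valid l ->
  nablaI a i j c l x = pdn (enc a) (RiemE i j c l) x
   - (GamE (IS (bl a i)) a i x * RiemE (IS (bl a i)) j c l x
    + GamE (IS (bl a j)) a j x * RiemE i (IS (bl a j)) c l x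
    + GamE (IS (bl a c)) a c x * RiemE i j (IS (bl a c)) l x
    + GamE (IS (bl a l)) a l x * RiemE i j c (IS (bl a l)) x).
Proof.
move=> Va Vi Vj Vc Vl; rewrite /nablaI !sumI_add !Qsum_gen //.
all: by move=> b; rewrite ?RiemE_V1 ?RiemE_V2 ?RiemE_V3 ?RiemE_V4.
Qed.


Lemma fc0x x : fc 0 x = 0. Proof. by []. Qed.
Ltac zsimp := rewrite ?fc0x ?mul0r ?mulr0 ?add0r ?addr0 ?subr0 ?sub0r ?oppr0 ?pdn_c.
Ltac scrunch2 := unfold bl, pay, lab; cbn [ieq RB NB]; zsimp; repeat (match goal with |- context [if ?c then _ else _] =>
    lazymatch c with context [if _ then _ else _] => fail | _ =>
      let H := fresh "H" in case H : c; [ try (move/eqP: H => H; subst) | idtac ] end end;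
    unfold bl, pay, lab; cbn [ieq RB NB]; rewrite ?eqxx; prune; zsimp).
Ltac calc2 := repeat (progress (scrunch2; unfold gFI, gCI; pds)).
Ltac nabla_tac := unfold RiemE, NE; cbn [GamE]; calc2; leafI.
Lemma NB3_1 lj lc ll b : NB 3 lj lc ll b = fc 0. Proof. by []. Qed.
Lemma NB3_2 li lc ll b : NB li 3 lc ll b = fc 0. Proof. by case: li => [|[|[|]]]. Qed.
Lemma NB3_3 li lj ll b : NB li lj 3 ll b = fc 0.
Proof. by case: li => [|[|[|]]]; case: lj => [|[|[|]]]. Qed.
Lemma NB3_4 li lj lc b : NB li lj lc 3 b = fc 0.
Proof. by case: li => [|[|[|]]]; case: lj => [|[|[|]]]; case: lc => [|[|[|]]]. Qed.
Lemma NE_V1 a b j c l : NE a (IV b) j c l = fc 0.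
Proof. case: a => a //=; case: ifP => // _; by rewrite ?NB3_1. Qed.
Lemma NE_V2 a b i c l : NE a i (IV b) c l = fc 0.
Proof. case: a => a //=; case: ifP => // _; by rewrite ?NB3_2. Qed.
Lemma NE_V3 a b i j l : NE a i j (IV b) l = fc 0.
Proof. case: a => a //=; case: ifP => // _; by rewrite ?NB3_3. Qed.
Lemma NE_V4 a b i j c : NE a i j c (IV b) = fc 0.
Proof. case: a => a //=; case: ifP => // _; by rewrite ?NB3_4. Qed.

Ltac vanV := rewrite ?RiemE_V1 ?RiemE_V2 ?RiemE_V3 ?RiemE_V4 ?GamE_lowV ?NE_V1 ?NE_V2 ?NE_V3 ?NE_V4
   ?pdn_c ?fc0x; ring.

Lemma nablaI_E a i j c l x : valid a -> valid i -> valid j -> valid c -> valid l ->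
  nablaI a i j c l x = NE a i j c l x.
Proof.
move=> Va Vi Vj Vc Vl; rewrite nablaI_pre //.
case: i Vi => a1 V1; [| vanV |]; case: j Vj => a2 V2; try vanV; case: c Vc => a3 V3; try vanV;
  case: l Vl => a4 V4; try vanV.
all: rewrite /= in V1 V2 V3 V4.
all: case: a Va => a0 V0; rewrite /= in V0.
all: nabla_tac.
Qed.


Lemma nablaR_val x (a i j c l : 'I_D) :
  nablaR eps f x a i j c l = NE (dec a) (dec i) (dec j) (dec c) (dec l) x.
Proof. by rewrite nablaR_I nablaI_E ?dec_valid. Qed.

Lemma NB_zero b x li lj lc ll : fF b x * (2 + 4 * fF1 b x) = 0 -> fF2 b x = 0 ->
  NB li lj lc ll b x = 0.
Proof.
move=> H1 H2.
case: li => [|[|[|li]]]; case: lj => [|[|[|lj]]]; case: lc => [|[|[|lc]]]; case: ll => [|[|[|ll]]];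
  rewrite /NB /fmul /fadd /fc ?H1 ?H2 ?mulr0 //.
Qed.

Lemma NE_zero a i j c l x :
  (forall b u, (1 <= b <= k)%N -> f b u * (2 + 4 * Derive (f b) u) = 0) ->
  (forall b u, (1 <= b <= k)%N -> Derive (Derive (f b)) u = 0) ->
  valid a -> NE a i j c l x = 0.
Proof.
move=> H1 H2; case: a => b //= Vb; case: ifP => Hb; first by [].
have Hb' : (1 <= b <= k)%N by move/negbT: Hb; lia.
apply: NB_zero; [exact: H1 | exact: H2].
Qed.

Lemma key_analysis (g : R -> R) : smooth g -> (forall u, g u = 0 \/ Derive g u = - (1 / 2)) ->
  forall u, Derive (Derive g) u = 0.
Proof.
move=> Hs Hg.
have d1 : forall u, ex_derive g u := fun u => Hs 1%N u.
have d2 : forall u, ex_derive (Derive g) u := fun u => Hs 2%N u.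
have E0 : forall u, g u * (1 + 2 * Derive g u) = 0.
  move=> u; case: (Hg u) => ->; first by rewrite mul0r.
  have -> : (1 + 2 * (- (1 / 2)) : R) = 0 by lra.
  by rewrite mulr0.
have E1 : forall u, Derive g u * (1 + 2 * Derive g u) + g u * (2 * Derive (Derive g) u) = 0.
  move=> u.
  have ex2 : ex_derive (fun t => 1 + 2 * Derive g t) u.
    apply: ex_derive_plus; [exact: ex_derive_const | apply: ex_derive_scal; exact: d2].
  have H1 : Derive (fun t => g t * (1 + 2 * Derive g t)) u =
            Derive g u * (1 + 2 * Derive g u) + g u * Derive (fun t => 1 + 2 * Derive g t) u :=
    Derive_mult _ _ _ (d1 u) ex2.
  have H2 : Derive (fun t => 1 + 2 * Derive g t) u = 2 * Derive (Derive g) u.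
    transitivity (Derive (fun _ : R => 1) u + Derive (fun t => 2 * Derive g t) u).
      exact: (Derive_plus (fun _ : R => 1) (fun t => 2 * Derive g t) u (ex_derive_const _ _)
                 (ex_derive_scal _ _ _ (d2 u))).
    have -> : Derive (fun _ : R => 1) u = 0 := Derive_const _ _.
    have -> : Derive (fun t => 2 * Derive g t) u = 2 * Derive (Derive g) u := Derive_scal _ _ _.
    by rewrite add0r.
  have H3 : Derive (fun t => g t * (1 + 2 * Derive g t)) u = 0.
    transitivity (Derive (fun _ : R => 0) u).
      exact: (Derive_ext _ (fun _ : R => 0) u E0).
    exact: Derive_const.
  by rewrite -H3 H1 H2.
have E2 : forall u, Derive g u = 0 \/ Derive g u = - (1 / 2).
  move=> u; case: (Hg u) => H; last by right.
  have := E1 u; rewrite H mul0r addr0 => /eqP; rewrite mulf_eq0 => /orP [/eqP -> | /eqP E].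
    by left.
  right; lra.
have cont : continuity (Derive g).
  move=> t; apply/continuity_pt_filterlim; exact: ex_derive_continuous (d2 t).
have E3 : forall u, Derive g u = Derive g 0.
  move=> u; apply/eqP; apply: contraT => Hne.
  have m1 := Rmin_l (Derive g u) (Derive g 0).
  have m2 := Rmin_r (Derive g u) (Derive g 0).
  have m3 := Rmax_l (Derive g u) (Derive g 0).
  have m4 := Rmax_r (Derive g u) (Derive g 0).
  move/RleP: m1 => m1; move/RleP: m2 => m2; move/RleP: m3 => m3; move/RleP: m4 => m4.
  have Hc : Rle (Rmin (Derive g u) (Derive g 0)) ((Derive g u + Derive g 0) / 2) /\
            Rle ((Derive g u + Derive g 0) / 2) (Rmax (Derive g u) (Derive g 0)).
    by split; apply/RleP; lra.
  have [y [_ Hy]] := IVT_gen (Derive g) u 0 ((Derive g u + Derive g 0) / 2) cont Hc.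
  case: (E2 u) => Hu; case: (E2 0) => H0; case: (E2 y) => Hyy;
    rewrite ?Hu ?H0 ?eqxx in Hne Hy * => //; lra.
move=> u.
have -> : Derive (Derive g) u = Derive (fun _ : R => Derive g 0) u := Derive_ext _ _ _ E3.
exact: Derive_const.
Qed.

Lemma LS_iff : locally_symmetric k eps f <->
  (forall i : nat, (1 <= i <= k)%N -> forall u : R, f i u = 0 \/ Derive (f i) u = - (1 / 2)).
Proof.
split.
- move=> LS i Hi u.
  pose x : P := fun _ => u.
  have Di : forall n, (n <= k)%N -> dec (nat_of_ord (inord n : 'I_D)) = IU n.
    move=> n Hn; rewrite inordK; last by rewrite /Defs.dim; lia.
    by rewrite /dec Hn.
  have := LS x (inord i) (inord 0) (inord i) (inord 0) (inord i).
  rewrite nablaR_val !Di; try lia.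
  have Hi0 : (i == 0%N) = false by lia.
  rewrite /NE Hi0 /lab /= Hi0 eqxx /= /fmul /fadd /fc /fF /fF1.
  change (Defs.coord x i) with u.
  move/eqP; rewrite mulf_eq0 oppr_eq0 invr_eq0 (negbTE (epsnz Hi)) /= mulf_eq0 => /orP [/eqP -> | /eqP E].
    by left.
  right; lra.
- move=> Hyp x a i j c l; rewrite nablaR_val; apply: NE_zero; last exact: dec_valid.
    move=> b u Hb; case: (Hyp b Hb u) => ->; first by rewrite mul0r.
    have -> : 2 + 4 * (- (1 / 2)) = 0 :> R by lra.
    by rewrite mulr0.
  move=> b u Hb; apply: key_analysis; [exact: fsm | exact: Hyp].
Qed.

End Main.

Unset Implicit Arguments.

Theorem lemma2p1 (k : nat) (eps : nat -> R) (f : nat -> R -> R) :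
  (1 <= k)%N ->
  (forall i : nat, (1 <= i <= k)%N -> eps i = 1 \/ eps i = -1) ->
  (forall i : nat, (1 <= i <= k)%N -> smooth (f i)) ->
  (locally_symmetric k eps f <->
   (forall i : nat, (1 <= i <= k)%N ->
      forall u : R, f i u = 0 \/ Derive (f i) u = - (1 / 2))).
Proof.
move=> k1 epsH fsm; exact: (LS_iff k1 fsm epsH).
Qed.
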